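(* Let $W$ be a binary symmetric channel (input and output alphabet $\{0,1\}$, crossover probability $p$), $N=2^n$, and $0\le i\le N-1$. Then for every $\mathbf{y}\in\mathbb{F}_2^N$ there exists $\mathbf{v}\in\mathbb{F}_2^N$ with $v_{i+1}=\dots=v_N=0$ and $W_N^{(i)}(\mathbf{v})=W_N^{(i)}(\mathbf{y})$. Consequently the set of values $\{W_N^{(i)}(\mathbf{y}):\mathbf{y}\in\mathbb{F}_2^N\}$ equals $\{W_N^{(i)}(\mathbf{y}):\mathbf{y}\in\mathbb{F}_2^N,\ y_{i+1}^N=0\}$, and the number of equivalence classes is at most $2^i$.
   Context: $G_N=F^{\otimes n}$ with $F=\begin{pmatrix}1&0\\1&1\end{pmatrix}$ over $\mathbb{F}_2$; $A(N,i)$ is the submatrix of rows $i+1,\dots,N$ of $G_N$, with row space $\mathrm{row}(A(N,i))$. For the BSC, $W^N(\mathbf{y}|\mathbf{x})=\prod_j W(y_j|x_j)$ with $W(y|x)=1-p$ if $y=x$ and $p$ otherwise. Define $W_N^{(i)}(\mathbf{y})=\frac{1}{2^{N-1}}\sum_{\mathbf{c}\in\mathrm{row}(A(N,i))}W^N(\mathbf{y}|\mathbf{c})$ (the transition probability of bit channel $i$ with all previous bits and the current bit equal to $0$). Equivalence classes: classes of vectors with equal value of $W_N^{(i)}$. *)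

(* Defs.v *)
From HB Require Import structures.
From mathcomp Require Import all_boot all_order all_algebra.
From mathcomp Require Import mxtens.
From mathcomp Require Import reals.
Set Implicit Arguments. Unset Strict Implicit. Unset Printing Implicit Defensive.
Import Order.TTheory GRing.Theory Num.Theory.
Local Open Scope ring_scope.

Definition Fker : 'M['F_2]_2 := \matrix_(a < 2, b < 2) (if (a < b)%N then 0 else 1).

Fixpoint Gmx (n : nat) : 'M['F_2]_(2 ^ n) :=
  match n with
  | 0 => 1%:M
  | n'.+1 => castmx (esym (expnS 2 n'), esym (expnS 2 n')) (tensmx Fker (Gmx n'))
  end.

(* A(N,i): rows i+1,...,N (1-indexed) of G_N, i.e. 0-indexed rows i..N-1. *)
Lemma Amx_idx (N i : nat) (k : 'I_(N - i)) : (k + i < N)%N.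
Proof. by rewrite addnC -ltn_subRL. Qed.

Definition Amx (n i : nat) : 'M['F_2]_(2 ^ n - i, 2 ^ n) :=
  \matrix_(k < 2 ^ n - i, j < 2 ^ n) Gmx n (Ordinal (Amx_idx k)) j.

Definition rowA (n i : nat) : {set 'rV['F_2]_(2 ^ n)} :=
  [set c | (c <= Amx n i)%MS].

Definition WN (R : realType) (p : R) (N : nat) (y x : 'rV['F_2]_N) : R :=
  \prod_(j < N) (if y 0 j == x 0 j then 1 - p else p).

Definition Wbit (R : realType) (p : R) (n i : nat) (y : 'rV['F_2]_(2 ^ n)) : R :=
  ((2 ^ (2 ^ n - 1))%:R)^-1 * \sum_(c in rowA n i) WN p y c.

Arguments Wbit {R} p n i y.

Definition Wclasses (R : realType) (p : R) (n i : nat) :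
  {set {set 'rV['F_2]_(2 ^ n)}} :=
  equivalence_partition (fun y z => Wbit p n i y == Wbit p n i z) setT.

(* Main.v *)
Require Import Defs.
From HB Require Import structures.
From mathcomp Require Import all_boot all_order all_algebra.
From mathcomp Require Import mxtens reals.
From mathcomp Require Import zify.
Import Order.TTheory GRing.Theory Num.Theory.
Local Open Scope ring_scope.

Lemma F2_add (a b c : 'F_2) : (a + b == c) = (a == c + b).
Proof. by move: a b c; do 3![case=> [[|[|//]]] ?]. Qed.

Lemma F2_11 : (1 + 1 : 'F_2) = 0.
Proof. by apply/eqP; rewrite F2_add add0r. Qed.

Lemma Gmx_tri n (a b : 'I_(2 ^ n)) :
  ((a < b)%N -> Gmx n a b = 0) /\ Gmx n a a = 1.
Proof.
elim: n a b => [|n IH] a b /=.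
  by rewrite !mxE eqxx; split=> // ab; by rewrite -val_eqE /= ltn_eqF.
rewrite !castmxE !mxE /=.
set m := (2 ^ n)%N.
have Hm : (0 < m)%N by rewrite expn_gt0.
split; last first.
  by rewrite ltnn /=; set k := Ordinal _; rewrite (IH k k).2 mulr1.
move=> ab.
have /orP [/eqP e|hlt] : ((a %/ m == b %/ m) || (a %/ m < b %/ m))%N.
  by rewrite -leq_eqVlt leq_div2r // ltnW.
  rewrite (IH _ _).1 ?mulr0 //=.
  move: ab; rewrite {1}(divn_eq a m) {1}(divn_eq b m) e ltn_add2l.
  by [].
by rewrite hlt mul0r.
Qed.

Lemma F2_neq0 (a : 'F_2) : a != 0 -> a = 1.
Proof.
case: a => [[|[|//]] pa] h; last by apply: val_inj.
by move: h; rewrite (_ : Ordinal pa = 0) ?eqxx //; apply: val_inj.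
Qed.

Lemma F2_canc (a b c : 'F_2) : (a + b == b + c) = (a == c).
Proof. by move: a b c; do 3![case=> [[|[|//]]] ?]. Qed.

Lemma rowA_add n i (c d : 'rV['F_2]_(2 ^ n)) :
  c \in rowA n i -> d \in rowA n i -> c + d \in rowA n i.
Proof. rewrite !inE; exact: addmx_sub. Qed.

Lemma rowA_opp n i (c : 'rV['F_2]_(2 ^ n)) :
  c \in rowA n i -> - c \in rowA n i.
Proof. by rewrite !inE -scaleN1r; exact: scalemx_sub. Qed.

Lemma rowG_in n i (j : 'I_(2 ^ n)) : (i <= j)%N -> row j (Gmx n) \in rowA n i.
Proof.
move=> ij; rewrite inE.
have hk : (j - i < 2 ^ n - i)%N by rewrite ltn_sub2r // (leq_ltn_trans ij).
apply: (eq_row_sub (Ordinal hk)); apply/rowP => b; rewrite !mxE.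
by congr (Gmx n _ b); apply: val_inj; rewrite /= subnK.
Qed.

Lemma Wshift (R : realType) (p : R) n i (y d : 'rV['F_2]_(2 ^ n)) :
  d \in rowA n i -> Wbit p n i (y + d) = Wbit p n i y.
Proof.
move=> hd; rewrite /Wbit; congr (_ * _).
rewrite (reindex_inj (addrI d)) /=; apply: eq_big => c.
  apply/idP/idP => h; last exact: rowA_add.
  by rewrite -(addKr d c); apply: rowA_add => //; exact: rowA_opp.
move=> _; rewrite /WN; apply: eq_bigr => j _.
by rewrite !mxE F2_canc.
Qed.

Lemma elimA n i : (i <= 2 ^ n)%N -> forall k, (k <= 2 ^ n - i)%N ->
  forall y : 'rV['F_2]_(2 ^ n), exists2 c, c \in rowA n i &
    forall j : 'I_(2 ^ n), (2 ^ n - k <= j)%N -> (y + c) 0 j = 0.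
Proof.
move=> hi; elim=> [|k IH] hk y.
  exists 0; first by rewrite inE sub0mx.
  by move=> j; rewrite subn0 leqNgt ltn_ord.
have [c hc Hc] := IH (ltnW hk) y.
have hN : (0 < 2 ^ n)%N by rewrite expn_gt0.
have hj0 : (2 ^ n - k.+1 < 2 ^ n)%N by lia.
set j0 := Ordinal hj0.
have hij0 : (i <= j0)%N by rewrite /=; lia.
have split_j : forall j : 'I_(2 ^ n), (2 ^ n - k.+1 <= j)%N -> j = j0 \/ (2 ^ n - k <= j)%N.
  move=> j hj; case: (ltngtP (2 ^ n - k.+1) j) hj => // [hlt|heq] _.
    right; move: hlt; rewrite subnS; case: (2 ^ n - k)%N => //.
  by left; apply: val_inj.
have [z0|nz] := eqVneq ((y + c) 0 j0) 0.
  exists c => // j /split_j [->//|]; exact: Hc.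
exists (c + row j0 (Gmx n)); first by apply: rowA_add => //; exact: rowG_in.
move=> j /split_j [->|hj].
  rewrite addrA [in LHS]mxE (F2_neq0 _ nz) mxE (Gmx_tri _ j0 j0).2.
  by apply/eqP; rewrite F2_add add0r.
rewrite addrA [in LHS]mxE Hc // mxE (Gmx_tri _ j0 j).1 ?addr0 //.
by move: hj; rewrite /=; lia.
Qed.

Lemma reduce (R : realType) (p : R) n i (y : 'rV['F_2]_(2 ^ n)) : (i <= 2 ^ n)%N ->
  exists v : 'rV['F_2]_(2 ^ n),
    (forall j : 'I_(2 ^ n), (i <= j)%N -> v 0 j = 0) /\ Wbit p n i v = Wbit p n i y.
Proof.
move=> hi; have [c hc Hc] := @elimA n i hi _ (leqnn _) y.
exists (y + c); split; last exact: Wshift.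
by move=> j hj; apply: Hc; rewrite subKn.
Qed.

Theorem corollary2 (R : realType) (p : R) (n i : nat) :
  0 <= p <= 1 -> (i < 2 ^ n)%N ->
  [/\ (forall y : 'rV['F_2]_(2 ^ n), exists v : 'rV['F_2]_(2 ^ n),
         (forall j : 'I_(2 ^ n), (i <= j)%N -> v 0 j = 0) /\
         Wbit p n i v = Wbit p n i y),
      (forall x : R,
         (exists y : 'rV['F_2]_(2 ^ n), Wbit p n i y = x) <->
         (exists y : 'rV['F_2]_(2 ^ n),
            (forall j : 'I_(2 ^ n), (i <= j)%N -> y 0 j = 0) /\ Wbit p n i y = x))
    & (#|Wclasses p n i| <= 2 ^ i)%N].
Proof.
move=> _ hi; have hi' := ltnW hi.
have part1 := fun y => @reduce R p n i y hi'.
split => //.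
  move=> x; split; last by case=> y [_ <-]; exists y.
  by case=> y <-; have [v [hv <-]] := part1 y; exists v.
set S := [set v : 'rV['F_2]_(2 ^ n) | [forall j : 'I_(2 ^ n), (i <= j)%N ==> (v 0 j == 0)]].
have ex : forall y : 'rV['F_2]_(2 ^ n),
    exists v, (v \in S) && (Wbit p n i v == Wbit p n i y).
  move=> y; have [v [hv e]] := part1 y; exists v; rewrite e eqxx andbT inE.
  by apply/forallP => j; apply/implyP => /hv ->.
pose rep (P : {set 'rV['F_2]_(2 ^ n)}) := odflt 0 [pick x in P].
pose h (P : {set 'rV['F_2]_(2 ^ n)}) := xchoose (ex (rep P)).
have hS : forall P, h P \in S by move=> P; have /andP[] := xchooseP (ex (rep P)).
have hW : forall P, Wbit p n i (h P) = Wbit p n i (rep P).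
  by move=> P; have /andP[_ /eqP] := xchooseP (ex (rep P)).
pose Rl := fun y z : 'rV['F_2]_(2 ^ n) => Wbit p n i y == Wbit p n i z.
have eqR0 : equivalence_rel Rl.
  by move=> x y z; split; [exact: eqxx | rewrite /Rl => /eqP ->].
have eqR : {in [set: 'rV['F_2]_(2 ^ n)] & &, equivalence_rel Rl} := in3W eqR0.
have part := equivalence_partitionP eqR.
have /and3P [/eqP cov triv nz0] := part.
have repP : forall P, P \in Wclasses p n i -> rep P \in P.
  move=> P PP; rewrite /rep; case: pickP => [x //|P0].
  have /set0Pn [x xP] : P != set0 by apply: contraNneq nz0 => <-.
  by have := P0 x; rewrite xP.
have inj : {in Wclasses p n i &, injective h}.
  move=> P Q PP QQ hPQ.
  have e : Rl (rep P) (rep Q) by rewrite /Rl -!hW hPQ.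
  have : rep Q \in pblock (Wclasses p n i) (rep P).
    by rewrite (pblock_equivalence_partition eqR) ?inE.
  rewrite (def_pblock triv PP (repP P PP)) => qP.
  by rewrite -(def_pblock triv PP qP) (def_pblock triv QQ (repP Q QQ)).
rewrite -(card_in_imset inj).
apply: (leq_trans (subset_leq_card (_ : h @: Wclasses p n i \subset S))).
  by apply/subsetP => _ /imsetP [P _ ->].
pose f (v : 'rV['F_2]_(2 ^ n)) : {ffun 'I_i -> 'F_2} := [ffun k => v 0 (widen_ord hi' k)].
have finj : {in S &, injective f}.
  move=> v w; rewrite !inE => /forallP vS /forallP wS e.
  apply/rowP => j; case: (ltnP j i) => [ji|ij].
    have := congr1 (fun g : {ffun 'I_i -> 'F_2} => g (Ordinal ji)) e.
    rewrite /f !ffunE.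
    by have -> : widen_ord hi' (Ordinal ji) = j by apply: val_inj.
  by rewrite (eqP (implyP (vS j) ij)) (eqP (implyP (wS j) ij)).
rewrite -(card_in_imset finj).
apply: (leq_trans (subset_leq_card (subsetT _))).
by rewrite cardsT card_ffun card_Fp // card_ord.
Qed.
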